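(* For real $\alpha\ge0$ and $\sigma^2>0$ let $\psi_1(\alpha,\sigma^2)=\int_0^{\pi/2}\frac{\alpha\sin^2\theta}{(\alpha^2\sin^2\theta+\sigma^2)^{1/2}}d\theta$. Then: (i) for each fixed $\sigma^2>0$, $\alpha\mapsto\psi_1(\alpha,\sigma^2)$ is concave and strictly increasing on $\alpha>0$; (ii) $0<\psi_1(\alpha,\sigma^2)\le1$ for all $\alpha>0,\sigma^2>0$; (iii) if $0<\sigma^2<\pi^2/16$, the equation $\alpha=\psi_1(\alpha,\sigma^2)$ has exactly two nonnegative solutions, $\alpha=0$ and $\alpha=F_1(\sigma^2)>0$, and $\alpha<\psi_1(\alpha,\sigma^2)<F_1(\sigma^2)$ for $\alpha\in(0,F_1(\sigma^2))$, while $F_1(\sigma^2)<\psi_1(\alpha,\sigma^2)<\alpha$ for $\alpha>F_1(\sigma^2)$. If $\sigma^2\ge\pi^2/16$, then $\alpha=0$ is the unique nonnegative solution, and $0<\psi_1(\alpha,\sigma^2)<\alpha$ for all $\alpha>0$. *)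

(* Defs.v *)
From Stdlib Require Import Reals ClassicalEpsilon.
Open Scope R_scope.

(* Integrand  θ ↦ α sin²θ / sqrt(α² sin²θ + σ²) ; s stands for σ². *)
Definition psi1_integrand (a s : R) (t : R) : R :=
  a * (sin t)^2 / sqrt (a^2 * (sin t)^2 + s).

(* For s > 0 the
   integrand is continuous, hence Riemann integrable, and the chosen value is
   its Riemann integral (RiemannInt does not depend on the integrability proof). *)
Definition psi1 (a s : R) : R :=
  epsilon (inhabits 0)
    (fun I => exists pr : Riemann_integrable (psi1_integrand a s) 0 (PI / 2),
                RiemannInt pr = I).

Definition concave_on_pos (f : R -> R) : Prop :=
  forall x y t, 0 < x -> 0 < y -> 0 <= t <= 1 ->
    t * f x + (1 - t) * f y <= f (t * x + (1 - t) * y).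

Definition strictly_increasing_on_pos (f : R -> R) : Prop :=
  forall x y, 0 < x -> x < y -> f x < f y.

(* Main.v *)
From Coquelicot Require Import Coquelicot.
From Stdlib Require Import Reals Lra Psatz ClassicalEpsilon.
Require Import Defs.
Open Scope R_scope.

Lemma cont_integrand a s t : 0 < s -> continuous (psi1_integrand a s) t.
Proof.
intros hs. apply (@ex_derive_continuous R_AbsRing R_NormedModule). unfold psi1_integrand.
assert (h2 : 0 <= sin t ^2) by (apply pow2_ge_0).
assert (hX : 0 < a^2*sin t^2+s) by nra.
auto_derive. replace (a * (a * 1) * (sin t * (sin t * 1))) with (a^2*sin t^2) by ring.
split; [lra|split; [apply Rgt_not_eq, sqrt_lt_R0; lra|exact I]].
Qed.

Definition phi_int a s t := (sin t)^2 / sqrt (a^2*(sin t)^2+s).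

Lemma cont_phi a s t : 0 < s -> continuous (phi_int a s) t.
Proof.
intros hs. apply (@ex_derive_continuous R_AbsRing R_NormedModule). unfold phi_int.
assert (h2 : 0 <= sin t ^2) by (apply pow2_ge_0).
assert (hX : 0 < a^2*sin t^2+s) by nra.
auto_derive. replace (a * (a * 1) * (sin t * (sin t * 1))) with (a^2*sin t^2) by ring.
split; [lra|split; [apply Rgt_not_eq, sqrt_lt_R0; lra|exact I]].
Qed.

Lemma cont_ex (f : R -> R) a b : (forall t, continuous f t) -> ex_RInt f a b.
Proof. intros h. apply (@ex_RInt_continuous R_CompleteNormedModule). intros; apply h. Qed.

Lemma psi1_eq a s : 0 < s -> psi1 a s = RInt (psi1_integrand a s) 0 (PI/2).
Proof.
intros hs. unfold psi1.
assert (ex : ex_RInt (psi1_integrand a s) 0 (PI/2)).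
{ apply cont_ex. intros; apply cont_integrand; auto. }
pose proof (ex_RInt_Reals_0 _ _ _ ex) as pr.
destruct (epsilon_spec (inhabits 0) (fun I => exists pr : Riemann_integrable (psi1_integrand a s) 0 (PI / 2),
                RiemannInt pr = I)) as [pr' hpr'].
{ exists (RiemannInt pr). exists pr. reflexivity. }
rewrite <- hpr'. symmetry. apply RInt_Reals.
Qed.
Definition H u s a := a*u/sqrt(a^2*u+s).
Definition dH u s a := u*s/((a^2*u+s)*sqrt(a^2*u+s)).

Lemma H_derive u s a : 0 <= u -> 0 < s -> is_derive (H u s) a (dH u s a).
Proof.
intros hu hs. unfold H, dH.
assert (hX : 0 < a^2*u+s) by nra.
assert (hq := sqrt_lt_R0 _ hX).
assert (hqq := sqrt_sqrt _ (Rlt_le _ _ hX)).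
auto_derive; replace (a*(a*1)) with (a^2) by ring.
- split; [lra|split;[lra|exact I]].
- set (q := sqrt (a^2*u+s)) in *.
  replace (a^2*u+s) with (q*q) by (rewrite hqq; ring).
  clearbody q. replace s with (q*q - a^2*u) by lra. revert hq. generalize (a:R) as b. intros b hq. field. lra.
Qed.

Lemma MVT2 (f df : R -> R) a b : (forall x, is_derive f x (df x)) -> a <= b ->
  exists c, a <= c <= b /\ f b - f a = df c * (b - a).
Proof.
intros hd hab.
destruct (MVT_gen f a b df) as [c [hc e]].
- intros; apply hd.
- intros. apply continuity_pt_filterlim.
  apply (@ex_derive_continuous R_AbsRing R_NormedModule). exists (df x). apply hd.
- rewrite Rmin_left, Rmax_right in hc by lra. exists c; auto.
Qed.

Lemma dH_nonneg u s a : 0 <= u -> 0 < s -> 0 <= dH u s a.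
Proof.
intros hu hs. unfold dH.
assert (hX : 0 < a^2*u+s) by nra.
assert (hq := sqrt_lt_R0 _ hX).
apply Rmult_le_pos; [nra|]. left; apply Rinv_0_lt_compat; nra.
Qed.

Lemma dH_pos u s a : 0 < u -> 0 < s -> 0 < dH u s a.
Proof.
intros hu hs. unfold dH.
assert (hX : 0 < a^2*u+s) by nra.
assert (hq := sqrt_lt_R0 _ hX).
apply Rmult_lt_0_compat; [nra|]. apply Rinv_0_lt_compat; nra.
Qed.

Lemma dH_le u s a : 0 <= u <= 1 -> 0 < s -> dH u s a <= 1 / sqrt s.
Proof.
intros hu hs. unfold dH.
assert (hau : 0 <= a^2*u) by (apply Rmult_le_pos; [apply pow2_ge_0|lra]).
assert (hX : 0 < a^2*u+s) by nra.
assert (hq := sqrt_lt_R0 _ hX).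
assert (hr := sqrt_lt_R0 _ hs).
assert (hqr : sqrt s <= sqrt (a^2*u+s)) by (apply sqrt_le_1_alt; nra).
set (q := sqrt (a^2*u+s)) in *. set (r := sqrt s) in *.
apply Rminus_le_0.
replace (1/r - u*s/((a^2*u+s)*q)) with (((a^2*u+s)*q - u*s*r)/((a^2*u+s)*q*r)) by (field; lra).
unfold Rdiv; apply Rmult_le_pos; [|left; apply Rinv_0_lt_compat; repeat apply Rmult_lt_0_compat; auto; lra].
assert (s*r <= (a^2*u+s)*q) by (apply Rmult_le_compat; nra).
assert (0 <= (1-u)*(s*r)) by (apply Rmult_le_pos; nra).
nra.
Qed.

Lemma dH_decr u s a b : 0 <= u -> 0 < s -> 0 <= a <= b -> dH u s b <= dH u s a.
Proof.
intros hu hs hab. unfold dH.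
assert (hX : 0 < a^2*u+s) by nra.
assert (hab2 : a^2 <= b^2) by nra.
assert (0 <= (b^2-a^2)*u) by (apply Rmult_le_pos; lra).
assert (hY : a^2*u+s <= b^2*u+s) by nra.
assert (hq := sqrt_lt_R0 _ hX).
assert (hqr : sqrt (a^2*u+s) <= sqrt (b^2*u+s)) by (apply sqrt_le_1_alt; nra).
set (q := sqrt (a^2*u+s)) in *. set (r := sqrt (b^2*u+s)) in *.
set (X := a^2*u+s) in *. set (Y := b^2*u+s) in *.
apply Rminus_le_0.
replace (u*s/(X*q) - u*s/(Y*r)) with (u*s*(Y*r - X*q)/((X*q)*(Y*r))) by (field; lra).
unfold Rdiv; apply Rmult_le_pos; [|left; apply Rinv_0_lt_compat; repeat apply Rmult_lt_0_compat; auto; lra].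
assert (X*q <= Y*r) by (apply Rmult_le_compat; nra).
apply Rmult_le_pos; [apply Rmult_le_pos; lra| lra].
Qed.

Lemma H_concave u s x y t : 0 <= u -> 0 < s -> 0 < x -> 0 < y -> 0 <= t <= 1 ->
  t * H u s x + (1-t) * H u s y <= H u s (t*x + (1-t)*y).
Proof.
intros hu hs hx hy ht.
assert (gen : forall x y t, 0 < x <= y -> 0 <= t <= 1 ->
  t * H u s x + (1-t) * H u s y <= H u s (t*x + (1-t)*y)).
{ clear x y t hx hy ht. intros x y t hxy ht.
  set (z := t*x+(1-t)*y).
  destruct (MVT2 (H u s) (dH u s) x z) as [c1 [hc1 e1]]; [intros; apply H_derive; auto| unfold z; nra|].
  destruct (MVT2 (H u s) (dH u s) z y) as [c2 [hc2 e2]]; [intros; apply H_derive; auto| unfold z; nra|].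
  assert (hd : dH u s c2 <= dH u s c1) by (apply dH_decr; auto; lra).
  assert (ez1 : z - x = (1-t)*(y-x)) by (unfold z; ring).
  assert (ez2 : y - z = t*(y-x)) by (unfold z; ring).
  rewrite ez1 in e1. rewrite ez2 in e2.
  assert (0 <= t*(1-t)*(y-x)) by (apply Rmult_le_pos; nra).
  nra. }
destruct (Rle_lt_dec x y).
- apply gen; auto; lra.
- replace (t*x+(1-t)*y) with ((1-t)*y + (1-(1-t))*x) by ring.
  replace (t * H u s x + (1-t) * H u s y) with ((1-t) * H u s y + (1-(1-t)) * H u s x) by ring.
  apply gen; lra.
Qed.

Lemma H_lip u s a b : 0 <= u <= 1 -> 0 < s -> a <= b ->
  0 <= H u s b - H u s a <= (b - a) / sqrt s.
Proof.
intros hu hs hab.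
destruct (MVT2 (H u s) (dH u s) a b) as [c [hc e]]; [intros; apply H_derive; lra|lra|].
rewrite e. assert (h1 := dH_nonneg u s c ltac:(lra) hs). assert (h2 := dH_le u s c hu hs).
split; [nra|]. replace ((b-a)/sqrt s) with (1/sqrt s * (b-a)) by (unfold Rdiv; ring). nra.
Qed.

Lemma H_strict u s a b : 0 < u -> 0 < s -> a < b -> H u s a < H u s b.
Proof.
intros hu hs hab.
destruct (MVT2 (H u s) (dH u s) a b) as [c [hc e]]; [intros; apply H_derive; lra|lra|].
assert (h1 := dH_pos u s c hu hs). nra.
Qed.

Lemma RInt_lin (f g : R -> R) a b p q : (forall t, continuous f t) -> (forall t, continuous g t) ->
  RInt (fun x => p * f x + q * g x) a b = p * RInt f a b + q * RInt g a b.
Proof.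
intros hf hg. apply is_RInt_unique.
apply (@is_RInt_plus R_NormedModule (fun x => p * f x) (fun x => q * g x)).
- apply (@is_RInt_scal R_NormedModule). apply (@RInt_correct R_CompleteNormedModule). apply cont_ex; auto.
- apply (@is_RInt_scal R_NormedModule). apply (@RInt_correct R_CompleteNormedModule). apply cont_ex; auto.
Qed.

Lemma RInt_cst a b c : RInt (fun _ => c) a b = (b - a) * c.
Proof. rewrite RInt_const. reflexivity. Qed.

Lemma RInt_sub (f g : R -> R) a b : (forall t, continuous f t) -> (forall t, continuous g t) ->
  RInt (fun x => f x - g x) a b = RInt f a b - RInt g a b.
Proof.
intros hf hg. apply is_RInt_unique.
apply (@is_RInt_minus R_NormedModule).
- apply (@RInt_correct R_CompleteNormedModule). apply cont_ex; auto.
- apply (@RInt_correct R_CompleteNormedModule). apply cont_ex; auto.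
Qed.

Lemma RInt_sin2 : RInt (fun t => sin t ^ 2) 0 (PI/2) = PI/4.
Proof.
apply is_RInt_unique.
assert (h : is_RInt (fun t => sin t ^ 2) 0 (PI/2)
   (minus ((fun t => (t - sin t * cos t)/2) (PI/2)) ((fun t => (t - sin t * cos t)/2) 0))).
{ apply (@is_RInt_derive R_CompleteNormedModule (fun t => (t - sin t * cos t)/2)).
- intros x _. auto_derive; [exact I|].
  pose proof (sin2_cos2 x) as e. unfold Rsqr in e. nra.
- intros x _. apply (@ex_derive_continuous R_AbsRing R_NormedModule). auto_derive. exact I. }
unfold minus, plus, opp in h; simpl in h. rewrite sin_PI2, cos_PI2, sin_0, cos_0 in h.
replace (PI/4) with ((PI / 2 - 1 * 0) / 2 + - ((0 - 0 * 1) / 2)) by field. exact h.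
Qed.

Lemma RInt_sin : RInt sin 0 (PI/2) = 1.
Proof.
apply is_RInt_unique.
assert (h : is_RInt sin 0 (PI/2) (minus ((fun t => - cos t) (PI/2)) ((fun t => - cos t) 0))).
{ apply (@is_RInt_derive R_CompleteNormedModule (fun t => - cos t)).
- intros x _. auto_derive; [exact I| ring].
- intros x _. apply (@ex_derive_continuous R_AbsRing R_NormedModule). auto_derive. exact I. }
unfold minus, plus, opp in h; simpl in h. rewrite cos_PI2, cos_0 in h.
replace 1 with (- 0 + - - 1) by ring. exact h.
Qed.

Ltac req := match goal with |- @eq _ ?x ?y => change (@eq R x y) end.

Lemma is_RInt_lin (f g : R -> R) a b p q : (forall t, continuous f t) -> (forall t, continuous g t) ->
  is_RInt (fun x => p * f x + q * g x) a b (p * RInt f a b + q * RInt g a b).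
Proof.
intros hf hg.
apply (@is_RInt_plus R_NormedModule (fun x => p * f x) (fun x => q * g x)).
- apply (@is_RInt_scal R_NormedModule). apply (@RInt_correct R_CompleteNormedModule). apply cont_ex; auto.
- apply (@is_RInt_scal R_NormedModule). apply (@RInt_correct R_CompleteNormedModule). apply cont_ex; auto.
Qed.

Lemma ex_lin (f g : R -> R) a b p q : (forall t, continuous f t) -> (forall t, continuous g t) ->
  ex_RInt (fun x => p * f x + q * g x) a b.
Proof. intros; eexists; apply is_RInt_lin; auto. Qed.

Lemma PI2_pos : 0 < PI/2.
Proof. pose proof PI_RGT_0. lra. Qed.

Lemma sin2_bd t : 0 <= sin t ^ 2 <= 1.
Proof. pose proof (SIN_bound t). split; [apply pow2_ge_0| nra]. Qed.

Lemma sin_pos t : 0 < t < PI/2 -> 0 < sin t.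
Proof. intros. apply sin_gt_0; pose proof PI_RGT_0; lra. Qed.

Lemma cont_sin t : continuous sin t.
Proof. apply (@ex_derive_continuous R_AbsRing R_NormedModule). auto_derive. exact I. Qed.

Definition Psi s a := RInt (psi1_integrand a s) 0 (PI/2).
Definition Phi s a := RInt (phi_int a s) 0 (PI/2).

Lemma integrand_H a s t : psi1_integrand a s t = H (sin t ^ 2) s a.
Proof. reflexivity. Qed.

Lemma Psi_Phi s a : 0 < s -> Psi s a = a * Phi s a.
Proof.
intros hs. unfold Psi, Phi.
rewrite (RInt_ext _ (fun x => a * phi_int a s x + 0 * phi_int a s x)).
2:{ intros. unfold psi1_integrand, phi_int. req. unfold Rdiv. ring. }
rewrite RInt_lin by (intros; apply cont_phi; auto). req; ring.
Qed.

Lemma Psi_mono s a b : 0 < s -> a <= b ->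
  0 <= Psi s b - Psi s a <= PI/2 * ((b - a) / sqrt s).
Proof.
intros hs hab. unfold Psi.
replace (RInt (psi1_integrand b s) 0 (PI/2) - RInt (psi1_integrand a s) 0 (PI/2)) with (RInt (fun x => 1 * psi1_integrand b s x + -1 * psi1_integrand a s x) 0 (PI/2)).
2:{ rewrite RInt_lin by (intros; apply cont_integrand; auto). req; ring. }
assert (ex := ex_lin (psi1_integrand b s) (psi1_integrand a s) 0 (PI/2) 1 (-1)
   (fun t => cont_integrand b s t hs) (fun t => cont_integrand a s t hs)).
pose proof PI2_pos.
split.
- replace 0 with (RInt (fun _ => 0) 0 (PI/2)) at 1 by (rewrite RInt_cst; req; ring).
  apply RInt_le; auto; [lra| apply (@ex_RInt_const R_NormedModule)|].
  intros x hx. rewrite !integrand_H. pose proof (H_lip (sin x ^2) s a b (sin2_bd x) hs hab). lra.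
- replace (PI / 2 * ((b - a) / sqrt s)) with (RInt (fun _ => (b - a) / sqrt s) 0 (PI/2)) by (rewrite RInt_cst; req; ring).
  apply RInt_le; auto; [lra| apply (@ex_RInt_const R_NormedModule)|].
  intros x hx. rewrite !integrand_H. pose proof (H_lip (sin x ^2) s a b (sin2_bd x) hs hab). lra.
Qed.

Lemma Psi_strict s a b : 0 < s -> a < b -> Psi s a < Psi s b.
Proof.
intros hs hab. unfold Psi. pose proof PI2_pos.
apply RInt_lt; [lra| intros; apply cont_integrand; auto| intros; apply cont_integrand; auto|].
intros x hx. rewrite !integrand_H. apply H_strict; auto.
pose proof (sin_pos x hx). apply pow_lt; auto.
Qed.

Lemma Psi_concave s x y t : 0 < s -> 0 < x -> 0 < y -> 0 <= t <= 1 ->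
  t * Psi s x + (1 - t) * Psi s y <= Psi s (t * x + (1 - t) * y).
Proof.
intros hs hx hy ht. unfold Psi. pose proof PI2_pos.
rewrite <- RInt_lin by (intros; apply cont_integrand; auto).
apply RInt_le; [lra| apply ex_lin; intros; apply cont_integrand; auto| apply cont_ex; intros; apply cont_integrand; auto|].
intros z hz. rewrite !integrand_H. apply H_concave; auto. apply pow2_ge_0.
Qed.

Lemma Psi_pos s a : 0 < s -> 0 < a -> 0 < Psi s a.
Proof.
intros hs ha. unfold Psi. pose proof PI2_pos.
apply Rle_lt_trans with (RInt (fun _ => 0) 0 (PI/2)); [rewrite RInt_cst; right; req; ring|].
apply RInt_lt; [lra| intros; apply cont_integrand; auto| intros; apply (@continuous_const R_UniformSpace R_UniformSpace)|].
intros x hx. pose proof (sin_pos x hx). unfold psi1_integrand.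
assert (0 < sin x ^ 2) by (apply pow_lt; auto).
assert (0 < a^2 * sin x^2 + s) by (pose proof (pow2_ge_0 a); nra).
apply Rdiv_lt_0_compat; [nra| apply sqrt_lt_R0; auto].
Qed.

Lemma Psi_le1 s a : 0 < s -> 0 < a -> Psi s a <= 1.
Proof.
intros hs ha. unfold Psi. pose proof PI2_pos. rewrite <- RInt_sin.
apply RInt_le; [lra| apply cont_ex; intros; apply cont_integrand; auto| apply cont_ex; apply cont_sin|].
intros x hx. pose proof (sin_pos x hx). unfold psi1_integrand.
assert (0 < sin x ^ 2) by (apply pow_lt; auto).
assert (0 < a^2 * sin x^2 + s) by (pose proof (pow2_ge_0 a); nra).
assert (hq : 0 < sqrt (a ^ 2 * sin x ^ 2 + s)) by (apply sqrt_lt_R0; auto).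
assert (hle : a * sin x <= sqrt (a ^ 2 * sin x ^ 2 + s)).
{ rewrite <- (sqrt_pow2 (a * sin x)) by nra. apply sqrt_le_1_alt. nra. }
set (q := sqrt (a ^ 2 * sin x ^ 2 + s)) in *.
apply Rminus_le_0.
replace (sin x - a * sin x ^ 2 / q) with (sin x * (q - a * sin x) / q) by (field; lra).
unfold Rdiv. apply Rmult_le_pos; [apply Rmult_le_pos; lra| left; apply Rinv_0_lt_compat; lra].
Qed.

Lemma Phi_decr s a b : 0 < s -> 0 <= a < b -> Phi s b < Phi s a.
Proof.
intros hs hab. unfold Phi. pose proof PI2_pos.
apply RInt_lt; [lra| intros; apply cont_phi; auto| intros; apply cont_phi; auto|].
intros x hx. pose proof (sin_pos x hx). unfold phi_int.
assert (hu : 0 < sin x ^ 2) by (apply pow_lt; auto).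
assert (0 < a^2 * sin x^2 + s) by (pose proof (pow2_ge_0 a); nra).
assert (a^2 < b^2) by nra.
assert (hlt : sqrt (a ^ 2 * sin x ^ 2 + s) < sqrt (b ^ 2 * sin x ^ 2 + s)) by (apply sqrt_lt_1_alt; nra).
assert (hq : 0 < sqrt (a ^ 2 * sin x ^ 2 + s)) by (apply sqrt_lt_R0; auto).
unfold Rdiv. apply Rmult_lt_compat_l; auto. apply Rinv_lt_contravar; auto. nra.
Qed.

Lemma Phi0 s : 0 < s -> Phi s 0 = PI/4 / sqrt s.
Proof.
intros hs. unfold Phi.
rewrite (RInt_ext _ (fun x => / sqrt s * sin x ^ 2 + 0 * sin x ^ 2)).
2:{ intros. unfold phi_int. req. replace (0^2 * sin x ^ 2 + s) with s by ring. unfold Rdiv. ring. }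
rewrite RInt_lin by (intros; apply (@ex_derive_continuous R_AbsRing R_NormedModule); auto_derive; exact I).
rewrite RInt_sin2. req. unfold Rdiv. ring.
Qed.

Lemma Phi_lower s a : 0 < s -> PI/4 / sqrt (a^2 + s) <= Phi s a.
Proof.
intros hs. unfold Phi. pose proof PI2_pos.
replace (PI/4 / sqrt (a^2 + s)) with (RInt (fun x => / sqrt (a^2+s) * sin x ^ 2 + 0 * sin x ^ 2) 0 (PI/2)).
2:{ rewrite RInt_lin by (intros; apply (@ex_derive_continuous R_AbsRing R_NormedModule); auto_derive; exact I).
    rewrite RInt_sin2. req. unfold Rdiv. ring. }
apply RInt_le; [lra| apply ex_lin; intros; apply (@ex_derive_continuous R_AbsRing R_NormedModule); auto_derive; exact I
  | apply cont_ex; intros; apply cont_phi; auto|].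
intros x hx. unfold phi_int. pose proof (sin2_bd x).
assert (0 < a^2 * sin x^2 + s) by (pose proof (pow2_ge_0 a); nra).
assert (hle : sqrt (a ^ 2 * sin x ^ 2 + s) <= sqrt (a ^ 2 + s)).
{ apply sqrt_le_1_alt. pose proof (pow2_ge_0 a). nra. }
assert (hq : 0 < sqrt (a ^ 2 * sin x ^ 2 + s)) by (apply sqrt_lt_R0; auto).
assert (/ sqrt (a^2+s) <= / sqrt (a ^ 2 * sin x ^ 2 + s)) by (apply Rinv_le_contravar; auto).
unfold Rdiv. nra.
Qed.

Lemma Psi_cont s : 0 < s -> continuity (fun a => Psi s a - a).
Proof.
intros hs.
assert (hr := sqrt_lt_R0 _ hs). pose proof PI2_pos.
set (L := PI/2 / sqrt s + 1).
assert (hL : 0 < L) by (unfold L; assert (0 < PI/2/sqrt s) by (apply Rdiv_lt_0_compat; auto); lra).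
assert (lip : forall x y, Rabs ((Psi s x - x) - (Psi s y - y)) <= L * Rabs (x - y)).
{ intros x y. destruct (Rle_lt_dec x y) as [h|h].
  - pose proof (Psi_mono s x y hs h) as [h1 h2].
    rewrite (Rabs_left1 (x-y)) by lra.
    replace (PI/2 * ((y-x)/sqrt s)) with (PI/2/sqrt s * (y - x)) in h2 by (field; lra).
    unfold L. apply Rabs_le. split; nra.
  - pose proof (Psi_mono s y x hs (Rlt_le _ _ h)) as [h1 h2].
    rewrite (Rabs_right (x-y)) by lra.
    replace (PI/2 * ((x-y)/sqrt s)) with (PI/2/sqrt s * (x - y)) in h2 by (field; lra).
    unfold L. apply Rabs_le. split; nra. }
intros x. unfold continuity_pt, continue_in, limit1_in, limit_in. intros eps heps.
exists (eps / L). split; [apply Rdiv_lt_0_compat; auto|].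
intros y [_ hy]. simpl in *. unfold R_dist in *.
eapply Rle_lt_trans; [apply lip|].
replace eps with (L * (eps / L)) by (field; lra).
apply Rmult_lt_compat_l; auto.
Qed.

Lemma psi1_Psi a s : 0 < s -> psi1 a s = Psi s a.
Proof. intros; rewrite psi1_eq; auto. Qed.

Lemma Psi0 s : 0 < s -> Psi s 0 = 0.
Proof. intros; rewrite Psi_Phi; auto; req; ring. Qed.

Theorem mainTheorem9 :
  (* (i) *)
  (forall s, 0 < s ->
     concave_on_pos (fun a => psi1 a s) /\
     strictly_increasing_on_pos (fun a => psi1 a s)) /\
  (* (ii) *)
  (forall a s, 0 < a -> 0 < s -> 0 < psi1 a s <= 1) /\
  (* (iii), small variance *)
  (forall s, 0 < s < PI ^ 2 / 16 ->
     exists F, 0 < F /\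
       (forall a, 0 <= a -> (a = psi1 a s <-> a = 0 \/ a = F)) /\
       (forall a, 0 < a < F -> a < psi1 a s < F) /\
       (forall a, F < a -> F < psi1 a s < a)) /\
  (* (iii), large variance *)
  (forall s, PI ^ 2 / 16 <= s ->
     (forall a, 0 <= a -> (a = psi1 a s <-> a = 0)) /\
     (forall a, 0 < a -> 0 < psi1 a s < a)).
Proof.
pose proof PI_RGT_0 as hpi. pose proof PI_4 as hpi4.
split; [|split; [|split]].
- intros s hs. split.
  + intros x y t hx hy ht. rewrite !psi1_Psi by auto. apply Psi_concave; auto.
  + intros x y hx hxy. rewrite !psi1_Psi by auto. apply Psi_strict; auto.
- intros a s ha hs. rewrite psi1_Psi by auto. split; [apply Psi_pos|apply Psi_le1]; auto.
- intros s [hs hsm].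
  set (a0 := sqrt ((PI^2/16 - s)/2)).
  assert (ha0 : 0 < a0) by (apply sqrt_lt_R0; lra).
  assert (ha02 : a0 ^ 2 = (PI^2/16 - s)/2) by (apply pow2_sqrt; lra).
  assert (hq : sqrt (a0^2 + s) < PI/4).
  { rewrite <- (sqrt_pow2 (PI/4)) by lra. apply sqrt_lt_1_alt. split; [nra|]. rewrite ha02. nra. }
  assert (hq0 : 0 < sqrt (a0^2 + s)) by (apply sqrt_lt_R0; nra).
  assert (hphi : 1 < Phi s a0).
  { eapply Rlt_le_trans; [|apply Phi_lower; auto].
    apply Rminus_lt_0. replace (PI/4/sqrt (a0^2+s) - 1) with ((PI/4 - sqrt (a0^2+s)) / sqrt (a0^2+s)) by (field; lra).
    apply Rdiv_lt_0_compat; lra. }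
  assert (hpsia0 : a0 < Psi s a0) by (rewrite Psi_Phi; nra).
  assert (ha01 : a0 < 1) by nra.
  assert (h2 : Psi s 2 < 2) by (pose proof (Psi_le1 s 2 hs ltac:(lra)); lra).
  destruct (IVT_gen (fun a => Psi s a - a) a0 2 0 (Psi_cont s hs)) as [F [hF eF]].
  { split.
    - apply Rle_trans with (Psi s 2 - 2); [apply Rmin_r| lra].
    - apply Rle_trans with (Psi s a0 - a0); [lra| apply Rmax_l]. }
  rewrite Rmin_left in hF by lra. simpl in eF.
  assert (hFpos : 0 < F) by lra.
  assert (hPF : Psi s F = F) by lra.
  assert (hPhiF : Phi s F = 1).
  { rewrite Psi_Phi in hPF by auto. apply Rmult_eq_reg_l with F; lra. }
  exists F. split; [auto|split; [|split]].
  + intros a ha. rewrite psi1_Psi by auto. split.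
    * intros e. destruct (Req_dec a 0) as [|ha0']; [left; auto| right].
      assert (hpa : Phi s a = 1).
      { rewrite Psi_Phi in e by auto. apply Rmult_eq_reg_l with a; lra. }
      destruct (Rtotal_order a F) as [h|[h|h]]; auto.
      -- pose proof (Phi_decr s a F hs ltac:(lra)). lra.
      -- pose proof (Phi_decr s F a hs ltac:(lra)). lra.
    * intros [e|e]; subst; [rewrite Psi0; auto| auto].
  + intros a ha. rewrite psi1_Psi by auto.
    pose proof (Phi_decr s a F hs ltac:(lra)) as k1.
    pose proof (Psi_strict s a F hs ltac:(lra)) as k2.
    rewrite hPF in k2. rewrite Psi_Phi by auto. rewrite Psi_Phi in k2 by auto. nra.
  + intros a ha. rewrite psi1_Psi by auto.
    pose proof (Phi_decr s F a hs ltac:(lra)) as k1.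
    pose proof (Psi_strict s F a hs ltac:(lra)) as k2.
    rewrite hPF in k2. rewrite Psi_Phi by auto. rewrite Psi_Phi in k2 by auto. nra.
- intros s hsl.
  assert (hs : 0 < s) by nra.
  assert (hr : PI/4 <= sqrt s).
  { rewrite <- (sqrt_pow2 (PI/4)) by lra. apply sqrt_le_1_alt. nra. }
  assert (hphi : forall a, 0 < a -> Phi s a < 1).
  { intros a ha. pose proof (Phi_decr s 0 a hs ltac:(lra)) as k. rewrite Phi0 in k by auto.
    assert (PI/4/sqrt s <= 1).
    { apply Rminus_le_0. replace (1 - PI/4/sqrt s) with ((sqrt s - PI/4) / sqrt s) by (field; lra).
      unfold Rdiv; apply Rmult_le_pos; [lra| left; apply Rinv_0_lt_compat; lra]. }
    lra. }
  split.
  + intros a ha. rewrite psi1_Psi by auto. split.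
    * intros e. destruct (Req_dec a 0) as [|ha0']; auto.
      pose proof (hphi a ltac:(lra)). rewrite Psi_Phi in e by auto. nra.
    * intros e; subst. rewrite Psi0; auto.
  + intros a ha. rewrite psi1_Psi by auto. split; [apply Psi_pos; auto|].
    pose proof (hphi a ha). rewrite Psi_Phi by auto. nra.
Qed.
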